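(* Consider the FlexPD-G iterates described in the context with $\alpha,\beta>0$ and integer $T\ge1$. For any $\eta_2,\eta_3>0$ and every $k\ge0$, \[\|x^{k+1,T}-x^*\|_{P_G}^2+c_2\|x^{k+1,T}-x^{k+1,T-1}\|^2+c_3\|x^k-x^*\|^2\le\|x^{k+1,T-1}-x^*\|^2-c_1\|x^{k+1,T}-x^*\|^2+\frac{\alpha}{\beta}\|\lambda^k-\lambda^*\|^2-\frac{\alpha}{\beta}\|\lambda^{k+1}-\lambda^*\|^2+\alpha\rho(B)\|x^k-x^*\|^2,\] where $P_G=2\alpha mI-\alpha(\eta_2+\eta_3)I-\alpha\beta A'A-\alpha\rho(B)I$, $c_1=1+\alpha\rho(B)$, $c_2=1-\frac{\alpha L^2}{\eta_2}$, and $c_3=\alpha\rho(B)\big(1-\frac{\rho(B)}{\eta_3}\big)$.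
   Context: Setting: $n$ agents are connected by a connected undirected graph with edge set $\mathcal E$, $\epsilon=|\mathcal E|$. For $x\in\mathbb R^n$ let $f(x)=\sum_{i=1}^n f_i(x_i)$, where each $f_i:\mathbb R\to\mathbb R$ is twice differentiable with $m\le f_i''\le L$ for constants $0<m\le L$; $\nabla f(x)=(f_1'(x_1),\dots,f_n'(x_n))'$. $A\in\mathbb R^{\epsilon\times n}$ is the edge–node incidence matrix (null space spanned by the all-ones vector). $B\in\mathbb R^{n\times n}$ is symmetric positive semidefinite with the same null space as $A$, off-diagonal entries nonzero only on edges, and $\rho(B)<m$. $x^*$ is the unique minimizer of $f$ subject to $Ax=0$ and $\lambda^*$ a Lagrange multiplier with $\nabla f(x^* )+A'\lambda^*=0$, $Ax^*=0$, $Bx^*=0$, chosen in the column space of $A$. FlexPD-G: given $\alpha,\beta>0$, $T\ge1$, $x^0$ arbitrary, $\lambda^0=0$; for $k\ge0$: $x^{k+1,0}=x^k$; for $t=1,\dots,T$, $x^{k+1,t}=x^{k+1,t-1}-\alpha\nabla f(x^{k+1,t-1})-\alpha A'\lambda^k-\alpha Bx^k$; then $x^{k+1}=x^{k+1,T}$, $\lambda^{k+1}=\lambda^k+\beta Ax^{k+1}$. Notation: $\rho(S)$ largest eigenvalue of symmetric $S$; $\|v\|_S^2:=v'Sv$ for any symmetric $S$; $\|\cdot\|$ Euclidean norm. *)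

(* Defs.v *)
From HB Require Import structures.
From mathcomp Require Import all_boot all_order all_algebra.
From mathcomp Require Import all_classical all_reals all_analysis.
Set Implicit Arguments. Unset Strict Implicit. Unset Printing Implicit Defensive.
Import Order.TTheory GRing.Theory Num.Theory.
Local Open Scope ring_scope.

Section FlexPD.
Variables (R : realType) (n eps : nat).

Definition adj (ends : 'I_eps -> 'I_n * 'I_n) : rel 'I_n :=
  fun i j => [exists e, (ends e == (i, j)) || (ends e == (j, i))].

Definition simple_connected_graph (ends : 'I_eps -> 'I_n * 'I_n) : Prop :=
  [/\ forall e, (ends e).1 != (ends e).2,
      forall e e', (ends e == ends e') || (ends e == ((ends e').2, (ends e').1))
                   -> e = e'
    & forall i j, connect (adj ends) i j].

Definition incidence (ends : 'I_eps -> 'I_n * 'I_n) : 'M[R]_(eps, n) :=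
  \matrix_(e, i) (if i == (ends e).1 then 1 else if i == (ends e).2 then -1 else 0).

Definition sqnorm m (v : 'cV[R]_m) : R := \sum_i v i 0 ^+ 2.
Definition wsqnorm (S : 'M[R]_n) (v : 'cV[R]_n) : R := (v^T *m S *m v) 0 0.

Definition largest_eigenvalue (S : 'M[R]_n) (r : R) : Prop :=
  eigenvalue S r /\ forall a, eigenvalue S a -> a <= r.

Definition psd (S : 'M[R]_n) : Prop := forall v : 'cV[R]_n, 0 <= wsqnorm S v.

Definition fsum (f : 'I_n -> R -> R) (x : 'cV[R]_n) : R := \sum_i f i (x i 0).
Definition grad (f : 'I_n -> R -> R) (x : 'cV[R]_n) : 'cV[R]_n :=
  \col_i (derive1 (f i) (x i 0)).

(* inner loop: x^{k+1,t} given x^k and lambda^k *)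
Fixpoint inner (f : 'I_n -> R -> R) (A : 'M[R]_(eps, n)) (B : 'M[R]_n)
    (alpha : R) (xk : 'cV[R]_n) (lam : 'cV[R]_eps) (t : nat) : 'cV[R]_n :=
  match t with
  | 0 => xk
  | t'.+1 => let y := inner f A B alpha xk lam t' in
             y - alpha *: grad f y - alpha *: (A^T *m lam) - alpha *: (B *m xk)
  end.

Fixpoint flexpd (f : 'I_n -> R -> R) (A : 'M[R]_(eps, n)) (B : 'M[R]_n)
    (alpha beta : R) (T : nat) (x0 : 'cV[R]_n) (k : nat) : 'cV[R]_n * 'cV[R]_eps :=
  match k with
  | 0 => (x0, 0)
  | k'.+1 => let p := flexpd f A B alpha beta T x0 k' in
             let x' := inner f A B alpha p.1 p.2 T in
             (x', p.2 + beta *: (A *m x'))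
  end.

End FlexPD.

(* Main.v *)
Require Import Defs.
From HB Require Import structures.
From mathcomp Require Import all_boot all_order all_algebra.
From mathcomp Require Import all_classical all_reals all_analysis.
From mathcomp Require Import complex.
From mathcomp Require Import ring lra.
Import Order.TTheory GRing.Theory Num.Theory.
Local Open Scope ring_scope.
Set Implicit Arguments. Unset Strict Implicit. Unset Printing Implicit Defensive.

Section Help.
Variable R : realType.

Definition dot n (u v : 'cV[R]_n) : R := (u^T *m v) 0 0.

Lemma dotE n (u v : 'cV[R]_n) : dot u v = \sum_i u i 0 * v i 0.
Proof. by rewrite /dot mxE; apply: eq_bigr => i _; rewrite mxE. Qed.

Lemma dotC n (u v : 'cV[R]_n) : dot u v = dot v u.
Proof. by rewrite !dotE; apply: eq_bigr => i _; rewrite mulrC. Qed.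

Lemma dotDl n (u v w : 'cV[R]_n) : dot (u + v) w = dot u w + dot v w.
Proof. by rewrite !dotE -big_split; apply: eq_bigr => i _; rewrite mxE mulrDl. Qed.

Lemma dotBl n (u v w : 'cV[R]_n) : dot (u - v) w = dot u w - dot v w.
Proof. by rewrite !dotE -sumrB; apply: eq_bigr => i _; rewrite !mxE mulrBl. Qed.

Lemma dotZl n a (u w : 'cV[R]_n) : dot (a *: u) w = a * dot u w.
Proof. by rewrite !dotE mulr_sumr; apply: eq_bigr => i _; rewrite !mxE mulrA. Qed.

Lemma dotNl n (u w : 'cV[R]_n) : dot (- u) w = - dot u w.
Proof. by rewrite -scaleN1r dotZl mulN1r. Qed.

Lemma dotDr n (u v w : 'cV[R]_n) : dot w (u + v) = dot w u + dot w v.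
Proof. by rewrite !(dotC w) dotDl. Qed.
Lemma dotBr n (u v w : 'cV[R]_n) : dot w (u - v) = dot w u - dot w v.
Proof. by rewrite !(dotC w) dotBl. Qed.
Lemma dotZr n a (u w : 'cV[R]_n) : dot w (a *: u) = a * dot w u.
Proof. by rewrite !(dotC w) dotZl. Qed.
Lemma dotNr n (u w : 'cV[R]_n) : dot w (- u) = - dot w u.
Proof. by rewrite !(dotC w) dotNl. Qed.

Lemma dotM m n (u : 'cV[R]_m) (M : 'M[R]_(m, n)) v : dot u (M *m v) = dot (M^T *m u) v.
Proof. by rewrite /dot trmx_mul trmxK mulmxA. Qed.

Lemma sqnormE n (v : 'cV[R]_n) : sqnorm v = dot v v.
Proof. by rewrite dotE; apply: eq_bigr => i _; rewrite expr2. Qed.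

Lemma sqnorm_ge0 n (v : 'cV[R]_n) : 0 <= sqnorm v.
Proof. by apply: sumr_ge0 => i _; rewrite sqr_ge0. Qed.

Lemma wsqE n (S : 'M[R]_n) v : wsqnorm S v = dot v (S *m v).
Proof. by rewrite /wsqnorm /dot mulmxA. Qed.

Lemma mvt_h (g : R -> R) m L : (forall x, derivable g x 1) ->
  (forall x, m <= derive1 g x <= L) ->
  forall a b, exists h, m <= h <= L /\ g b - g a = h * (b - a).
Proof.
move=> dg bd a b.
wlog ab : a b / a <= b.
  move=> Hw; case: (lerP a b) => [/Hw//|/ltW ba].
  have [h [hb he]] := Hw _ _ ba; exists h; split => //.
  by rewrite -[LHS]opprB he; ring.
have [||c _ hc] := @MVT_segment R g (derive1 g) a b ab.
- move=> x _; rewrite derive1E; exact: derivableP (dg x).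
- by apply: derivable_within_continuous => x _; exact: dg.
by exists (derive1 g c); split => //; exact: bd.
Qed.

Lemma comp_ineq (m L h eta e w : R) : 0 < m -> m <= h <= L -> 0 < eta ->
  0 <= 2 * (e * (h * (e - w))) - (2 * m - eta) * e ^+ 2 + L ^+ 2 / eta * w ^+ 2.
Proof.
move=> hm /andP[h1 h2] he.
suff : 0 <= eta * (2 * (e * (h * (e - w))) - (2 * m - eta) * e ^+ 2 + L ^+ 2 / eta * w ^+ 2).
  by rewrite pmulr_rge0.
have -> : eta * (2 * (e * (h * (e - w))) - (2 * m - eta) * e ^+ 2 + L ^+ 2 / eta * w ^+ 2)
   = 2 * eta * (h - m) * e ^+ 2 + (eta * e - h * w) ^+ 2 + (L ^+ 2 - h ^+ 2) * w ^+ 2.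
  by field; rewrite gt_eqF.
have hL : 0 <= L ^+ 2 - h ^+ 2 by nra.
have : 0 <= 2 * eta * (h - m) * e ^+ 2.
  by apply: mulr_ge0; [apply: mulr_ge0; lra|exact: sqr_ge0].
have := sqr_ge0 (eta * e - h * w).
have := mulr_ge0 hL (sqr_ge0 w).
lra.
Qed.

End Help.

Section Ray.
Local Open Scope sesquilinear_scope.
Variable R : realType.
Local Notation toC := (real_complex R).

Lemma rayleigh n (B : 'M[R]_n) (rho : R) : B^T = B ->
  (forall a, eigenvalue B a -> a <= rho) ->
  forall x : 'rV[R]_n, (x *m B *m x^T) 0 0 <= rho * (x *m x^T) 0 0.
Proof.
move=> Bsym Bev x.
pose Bc := map_mx toC B.
have realC : forall r : R, toC r \is Num.real.
  move=> r; apply/complex_realP; by exists r.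
have Bcreal : Bc \is a realmx by apply/mxOverP => i j; rewrite mxE.
have Bcherm : Bc \is hermsymmx.
  apply: realsym_hermsym => //; apply/is_hermitianmxP.
  rewrite expr0 scale1r; apply/matrixP => i j; rewrite !mxE.
  by rewrite -{1}Bsym mxE.
have Bcnorm := hermitian_normalmx Bcherm.
have Bceq : Bc = invmx (spectralmx Bc) *m diag_mx (spectral_diag Bc) *m spectralmx Bc.
  exact: (elimT (@orthomx_spectralP _ _ Bc) Bcnorm).
set P := spectralmx Bc in Bceq *; set sp := spectral_diag Bc in Bceq *.
have Pu : P \is unitarymx := @spectral_unitarymx _ _ Bc.
have Punit : P \in unitmx := @spectral_unit _ _ Bc.
have PV : invmx P = P^t* := invmx_unitary Pu.
have spreal := @hermitian_spectral_diag_real _ _ _ Bcherm.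
have spR : forall j, toC (complex.Re (sp 0 j)) = sp 0 j.
  by move=> j; apply: RRe_real; apply: (mxOverP spreal).
have evC : forall j, eigenvalue Bc (sp 0 j).
  move=> j; apply/eigenvalueP.
  exists (row j P).
    rewrite -row_mul {1}Bceq !mulmxA mulmxV // mul1mx row_mul row_diag_mx.
    by rewrite -scalemxAl -rowE.
  apply/eqP => H.
  have PP : P *m P^t* = 1%:M by apply/unitarymxP.
  have := congr1 (row j) PP; rewrite row_mul H mul0mx => /rowP/(_ j).
  by rewrite !mxE eqxx /= => /eqP; rewrite eq_sym oner_eq0.
have spev : forall j, sp 0 j <= (toC rho).
  move=> j; rewrite -spR lecR; apply: Bev.
  rewrite eigenvalue_root_char -(fmorph_root (real_complex R)) map_char_poly.
  rewrite [X in root _ X](spR j) -eigenvalue_root_char; exact: evC.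
pose xc := map_mx toC x.
have xcR : xc^t* = xc^T.
  apply: realmxC; apply/mxOverP => i j; rewrite !mxE; exact: realC.
have key1 : map_mx toC (x *m B *m x^T) = xc *m Bc *m xc^t*.
  by rewrite xcR !map_mxM map_trmx.
have key2 : map_mx toC (x *m x^T) = xc *m xc^t*.
  by rewrite xcR !map_mxM map_trmx.
pose u := xc *m P^t*.
have ut : u^t* = P *m xc^t* by rewrite /u trmx_mul map_mxM trmxCK.
have e1 : xc *m Bc *m xc^t* = u *m diag_mx sp *m u^t*.
  by rewrite ut Bceq PV /u !mulmxA.
have e2 : xc *m xc^t* = u *m u^t*.
  by rewrite ut /u -mulmxA (mulmxA _ P) -PV mulVmx // mul1mx.
have H : forall (a : complex R) j, a * sp 0 j * a^* <= toC rho * (a * a^*).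
  move=> a j; rewrite mulrAC [X in _ <= X]mulrC ler_wpM2l ?mul_conjC_ge0 //.
have k1 : toC ((x *m B *m x^T) 0 0) = (u *m diag_mx sp *m u^t*) 0 0.
  by rewrite -e1 -key1 [RHS]mxE.
have k2 : toC ((x *m x^T) 0 0) = (u *m u^t*) 0 0.
  by rewrite -e2 -key2 [RHS]mxE.
have Hc : toC ((x *m B *m x^T) 0 0) <= toC rho * toC ((x *m x^T) 0 0).
  rewrite k1 k2 mul_mx_diag !mxE mulr_sumr; apply: ler_sum => j _.
  rewrite !mxE; exact: H.
by move: Hc; rewrite -rmorphM lecR.
Qed.
End Ray.

Theorem lemma3p10 (R : realType) (n eps : nat)
  (ends : 'I_eps -> 'I_n * 'I_n) (f : 'I_n -> R -> R) (m L : R)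
  (B : 'M[R]_n) (rhoB : R) (xstar : 'cV[R]_n) (lamstar : 'cV[R]_eps)
  (alpha beta : R) (T : nat) (x0 : 'cV[R]_n) (eta2 eta3 : R) (k : nat) :
  simple_connected_graph ends ->
  0 < m -> m <= L ->
  (forall i x, derivable (f i) x 1 /\ derivable (derive1 (f i)) x 1) ->
  (forall i x, m <= derive1n 2 (f i) x <= L) ->
  B^T = B -> psd B ->
  (forall v : 'cV[R]_n, B *m v = 0 <-> incidence R ends *m v = 0) ->
  (forall i j, i != j -> B i j != 0 -> adj ends i j) ->
  largest_eigenvalue B rhoB -> rhoB < m ->
  incidence R ends *m xstar = 0 ->
  (forall x, incidence R ends *m x = 0 -> fsum f xstar <= fsum f x) ->
  grad f xstar + (incidence R ends)^T *m lamstar = 0 ->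
  B *m xstar = 0 ->
  (exists y : 'cV[R]_n, lamstar = incidence R ends *m y) ->
  0 < alpha -> 0 < beta -> (1 <= T)%N -> 0 < eta2 -> 0 < eta3 ->
  let A := incidence R ends in
  let xk := (flexpd f A B alpha beta T x0 k).1 in
  let lamk := (flexpd f A B alpha beta T x0 k).2 in
  let lamk1 := (flexpd f A B alpha beta T x0 k.+1).2 in
  let xT := inner f A B alpha xk lamk T in
  let xT1 := inner f A B alpha xk lamk T.-1 in
  let PG := (2 * alpha * m - alpha * (eta2 + eta3) - alpha * rhoB)%:M
            - (alpha * beta) *: (A^T *m A) in
  let c1 := 1 + alpha * rhoB in
  let c2 := 1 - alpha * L ^+ 2 / eta2 in
  let c3 := alpha * rhoB * (1 - rhoB / eta3) in
  wsqnorm PG (xT - xstar) + c2 * sqnorm (xT - xT1) + c3 * sqnorm (xk - xstar)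
  <= sqnorm (xT1 - xstar) - c1 * sqnorm (xT - xstar)
     + alpha / beta * sqnorm (lamk - lamstar) - alpha / beta * sqnorm (lamk1 - lamstar)
     + alpha * rhoB * sqnorm (xk - xstar).
Proof.
move=> Hg Hm HmL Hder Hder2 Bsym Bpsd HBA Hadj [Hev Hmax] HrhoM HAx Hmin Hkkt HBx Hlam Ha Hb HT He2 He3.
case: T HT => [//|T'] _.
cbv zeta.
set A := incidence R ends in HAx Hkkt *.
set xk := (flexpd _ _ _ _ _ _ _ k).1.
set lamk := (flexpd _ _ _ _ _ _ _ k).2.
set lamk1 := (flexpd _ _ _ _ _ _ _ k.+1).2.
set xT1 := inner _ _ _ _ _ _ T'.+1.-1.
set xT := inner _ _ _ _ _ _ T'.+1.
have hz : xT = xT1 - alpha *: grad f xT1 - alpha *: (A^T *m lamk) - alpha *: (B *m xk).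
  exact: erefl.
have hl : lamk1 = lamk + beta *: (A *m xT) by exact: erefl.
clearbody xT lamk1 xT1 lamk xk.
have gs : grad f xstar = - (A^T *m lamstar).
  by apply/eqP; rewrite -addr_eq0 Hkkt.
set e := xT - xstar.
set d := xk - xstar.
set w := xT - xT1.
set g := grad f xT1 - grad f xstar.
set mu := lamk - lamstar.
have he : e = xT - xstar by [].
have hd : d = xk - xstar by [].
have hw0 : w = xT - xT1 by [].
have hg : g = grad f xT1 - grad f xstar by [].
have hmu : mu = lamk - lamstar by [].
clearbody e d w g mu.
have hw : w = - (alpha *: (g + A^T *m mu + B *m d)).
  rewrite hw0 hg hmu hd hz gs !mulmxBr HBx.
  set p1 := grad f xT1; set p2 := A^T *m lamk; set p3 := A^T *m lamstar; set p4 := B *m xk.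
  by apply/matrixP => i j; rewrite !mxE; ring.
have hAe : A *m xT = A *m e by rewrite he mulmxBr HAx subr0.
have hl' : lamk1 - lamstar = mu + beta *: (A *m e).
  rewrite hl -hAe hmu.
  set p1 := beta *: (A *m xT).
  by apply/matrixP => i j; rewrite !mxE; ring.
have hy : xT1 - xstar = e - w.
  by rewrite he hw0; apply/matrixP => i j; rewrite !mxE; ring.
pose AE := dot (A *m e) (A *m e).
pose G := dot e g. pose Cr := dot (A *m e) mu. pose Bd := dot e (B *m d).
have I1 : sqnorm (xT1 - xstar) = sqnorm e - 2 * dot e w + sqnorm w.
  rewrite hy !sqnormE dotBl !dotBr (dotC w e); ring.
have I2 : dot e w = - (alpha * (G + Cr + Bd)).
  by rewrite hw dotNr dotZr !dotDr dotM trmxK.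
have I3 : sqnorm (lamk1 - lamstar) = sqnorm mu + 2 * beta * Cr + beta ^+ 2 * AE.
  rewrite hl' !sqnormE dotDl !dotDr !dotZl !dotZr (dotC mu).
  rewrite /Cr /AE; ring.
have I4 : wsqnorm ((2 * alpha * m - alpha * (eta2 + eta3) - alpha * rhoB)%:M
            - (alpha * beta) *: (A^T *m A)) e
          = (2 * alpha * m - alpha * (eta2 + eta3) - alpha * rhoB) * sqnorm e - alpha * beta * AE.
  rewrite wsqE mulmxBl mul_scalar_mx -scalemxAl -mulmxA dotBr !dotZr dotM trmxK.
  by rewrite sqnormE.
have F3 : 0 <= 2 * G - (2 * m - eta2) * sqnorm e + L ^+ 2 / eta2 * sqnorm w.
  have -> : 2 * G - (2 * m - eta2) * sqnorm e + L ^+ 2 / eta2 * sqnorm w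
     = \sum_i (2 * (e i 0 * g i 0) - (2 * m - eta2) * e i 0 ^+ 2 + L ^+ 2 / eta2 * w i 0 ^+ 2).
    by rewrite /G dotE /sqnorm !mulr_sumr -sumrB -big_split.
  apply: sumr_ge0 => i _.
  have [h [hh Eh]] := mvt_h (fun x => (Hder i x).2) (fun x => Hder2 i x) (xstar i 0) (xT1 i 0).
  have gi : g i 0 = h * (e i 0 - w i 0).
    rewrite hg !mxE Eh; congr (_ * _).
    by have := congr1 (fun M : 'cV[R]_n => M i 0) hy; rewrite !mxE.
  by rewrite gi; apply: comp_ineq.
have Q : forall x, dot x (B *m x) <= rhoB * sqnorm x.
  by move=> x; have := rayleigh Bsym Hmax (x^T); rewrite trmxK sqnormE /dot mulmxA.
have sym : dot d (B *m e) = Bd by rewrite /Bd dotM Bsym dotC.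
have psdv : forall t, 0 <= t ^+ 2 * dot e (B *m e) + 2 * t * Bd + dot d (B *m d).
  move=> t; have := Bpsd (t *: e + d).
  rewrite wsqE mulmxDr -scalemxAr !dotDl !dotDr !dotZl !dotZr sym.
  rewrite -/Bd; nra.
have F4 : 0 <= 2 * Bd + eta3 * sqnorm e + rhoB ^+ 2 / eta3 * sqnorm d.
  have QE := Q e; have QD := Q d; have E0 := sqnorm_ge0 e; have D0 := sqnorm_ge0 d.
  have V0 : 0 <= rhoB ^+ 2 / eta3 * sqnorm d.
    by apply: mulr_ge0 => //; apply: divr_ge0; [exact: sqr_ge0|exact: ltW].
  case: (lerP rhoB 0) => hr.
    have := psdv 1; nra.
  pose t := eta3 / rhoB.
  have P2 : 0 <= t ^+ 2 * rhoB * sqnorm e + 2 * t * Bd + rhoB * sqnorm d.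
    have := psdv t; have := ler_wpM2l (sqr_ge0 t) QE; nra.
  have -> : 2 * Bd + eta3 * sqnorm e + rhoB ^+ 2 / eta3 * sqnorm d
     = rhoB / eta3 * (t ^+ 2 * rhoB * sqnorm e + 2 * t * Bd + rhoB * sqnorm d).
    rewrite /t; field; apply/andP; split; rewrite gt_eqF //.
  by apply: mulr_ge0 => //; apply: divr_ge0; apply: ltW.
rewrite I4 I1 I2 I3.
have c2e : alpha * L ^+ 2 / eta2 = alpha * (L ^+ 2 / eta2) by rewrite mulrA.
have c3e : alpha * rhoB * (1 - rhoB / eta3) = alpha * rhoB - alpha * (rhoB ^+ 2 / eta3).
  by rewrite mulrBr mulr1 expr2 !mulrA.
have lb : alpha / beta * (sqnorm mu + 2 * beta * Cr + beta ^+ 2 * AE)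
   = alpha / beta * sqnorm mu + 2 * alpha * Cr + alpha * beta * AE.
  by field; rewrite gt_eqF.
rewrite c2e c3e lb.
have := mulr_ge0 (ltW Ha) F3; have := mulr_ge0 (ltW Ha) F4.
set u := L ^+ 2 / eta2; set v := rhoB ^+ 2 / eta3.
lra.
Qed.
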